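(* Assume product-form weights $w^t_i=u(i)v(m_t)$. Let $x_{1:n}\in\mathcal X^n$ and let $2\le t\le n-1$ be such that $x_t\in\mathcal A_{t-1}$ (an old symbol) and $x_{t+1}\notin\mathcal A_t$ (a new symbol). Let $x'_{1:n}$ be the sequence obtained from $x_{1:n}$ by swapping $x_t$ and $x_{t+1}$. Then $R^{\vec\beta^*}_S(x'_{1:n}) > R^{\vec\beta^*}_S(x_{1:n})$. Consequently, among all orderings of a fixed multiset of symbols, the redundancy $R^{\vec\beta^*}_S$ is maximized by an ordering in which all $m$ distinct symbols appear in the first $m$ positions.
   Context: Let $\mathcal X$ be a finite base alphabet. For $x_{1:n}\in\mathcal X^n$, let $n_i$ be the number of occurrences of $i$, $\mathcal A=\{x_1,\dots,x_n\}$, $m=|\mathcal A|$; for $0\le t\le n$, $\mathcal A_t=\{x_1,\dots,x_t\}$ ($\mathcal A_0=\emptyset$), $m_t=|\mathcal A_t|$, $n^t_i$ the count of $i$ in $x_{1:t}$. Product-form weights: $u:\mathcal X\to(0,\infty)$, $v:\{0,1,\dots\}\to(0,\infty)$ with $w^t_i:=u(i)v(m_t)$ and $\sum_{k\in\mathcal X\setminus\mathcal A_t}w^t_k\le1$. Adaptive model: $\beta^*_t:=m_t/\ln\frac{t+1}{m_t}$ for $t\ge1$, $\beta^*_0\in(0,\infty)$ fixed; $S^{\vec\beta^*}(x_{t+1}=i\mid x_{1:t})=n^t_i/(t+\beta^*_t)$ if $n^t_i>0$ and $\beta^*_t w^t_i/(t+\beta^*_t)$ if $n^t_i=0$; $S^{\vec\beta^*}(x_{1:n})=\prod_{t=0}^{n-1}S^{\vec\beta^*}(x_{t+1}\mid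 x_{1:t})$. Redundancy $R^{\vec\beta^*}_S(x_{1:n}):=\ln\big(n^{-n}\prod_{j\in\mathcal A}n_j^{n_j}\big)-\ln S^{\vec\beta^*}(x_{1:n})$. Natural logarithms. *)

(* Defs.v *)
From Stdlib Require Import Reals Lra Lia List Permutation.
Import ListNotations.
Open Scope R_scope.

Section Adaptive.
Context {X : Type} (eq_dec : forall a b : X, {a = b} + {a <> b}).

Definition ndistinct (l : list X) : nat := length (nodup eq_dec l).

Definition cnt (l : list X) (i : X) : nat := count_occ eq_dec l i.

(* beta*_t, where the prefix p = x_{1:t} has length t *)
Definition beta_star (beta0 : R) (p : list X) : R :=
  match length p with
  | O => beta0
  | S _ => INR (ndistinct p) / ln (INR (length p + 1) / INR (ndistinct p))
  end.

(* S^{beta*}(x_{t+1} = i | x_{1:t}), prefix p = x_{1:t}, t = length p,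
   with product-form weight w^t_i = u(i) v(m_t) *)
Definition cond_prob (u : X -> R) (v : nat -> R) (beta0 : R)
  (p : list X) (i : X) : R :=
  let t := INR (length p) in
  let b := beta_star beta0 p in
  if (0 <? cnt p i)%nat
  then INR (cnt p i) / (t + b)
  else b * (u i * v (ndistinct p)) / (t + b).

Definition seq_prob (u : X -> R) (v : nat -> R) (beta0 : R) (x : list X) : R :=
  fold_right Rmult 1
    (map (fun t => match nth_error x t with
                   | Some i => cond_prob u v beta0 (firstn t x) i
                   | None => 1
                   end) (seq 0 (length x))).

Definition ml_prob (x : list X) : R :=
  fold_right Rmult 1 (map (fun j => INR (cnt x j) ^ cnt x j) (nodup eq_dec x))
  / INR (length x) ^ length x.

Definition redundancy (u : X -> R) (v : nat -> R) (beta0 : R) (x : list X) : R :=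
  ln (ml_prob x) - ln (seq_prob u v beta0 x).

Definition new_weight_sum (enum : list X) (u : X -> R) (v : nat -> R)
  (p : list X) : R :=
  fold_right Rplus 0
    (map (fun k => u k * v (ndistinct p))
       (filter (fun k => if in_dec eq_dec k p then false else true) enum)).

End Adaptive.

(* swap the entries at 0-based positions k and k+1 *)
Fixpoint swap_at {X : Type} (k : nat) (l : list X) : list X :=
  match k, l with
  | O, a :: b :: r => b :: a :: r
  | S k', a :: r => a :: swap_at k' r
  | _, _ => l
  end.

(* Main.v *)
Require Import Defs.
From Stdlib Require Import Reals List Permutation Lra Lia.
Import ListNotations.
Open Scope R_scope.

Lemma ln_pos (y : R) : 1 < y -> 0 < ln y.
Proof. intro. rewrite <- ln_1. apply ln_increasing; lra. Qed.
Lemma key (s m : R) : 1 <= m -> m + 1 <= s ->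
  m / ln (s/m) * (s + m / ln ((s+1)/m)) < m / ln ((s+1)/m) * (s + (m+1) / ln ((s+1)/(m+1))).
Proof.
  intros Hm Hs.
  assert (Hq1 : 1 < s/m) by (apply (Rmult_lt_reg_r m); [lra|]; unfold Rdiv; rewrite Rmult_assoc, Rinv_l; lra).
  assert (Hq2 : 1 < (s+1)/m) by (apply (Rmult_lt_reg_r m); [lra|]; unfold Rdiv; rewrite Rmult_assoc, Rinv_l; lra).
  assert (Hq3 : 1 < (s+1)/(m+1)) by (apply (Rmult_lt_reg_r (m+1)); [lra|]; unfold Rdiv; rewrite Rmult_assoc, Rinv_l; lra).
  set (L1 := ln (s/m)). set (L2 := ln ((s+1)/m)). set (L3 := ln ((s+1)/(m+1))).
  assert (P1 : 0 < L1) by (apply ln_pos; auto).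
  assert (P2 : 0 < L2) by (apply ln_pos; auto).
  assert (P3 : 0 < L3) by (apply ln_pos; auto).
  assert (H31 : L3 < L1).
  { apply ln_increasing. lra.
    apply (Rmult_lt_reg_r (m*(m+1))). nra.
    replace ((s + 1) / (m + 1) * (m * (m + 1))) with ((s+1)*m) by (field; lra).
    replace (s / m * (m * (m + 1))) with (s*(m+1)) by (field; lra). nra. }
  assert (H21 : L2 < L1 + 1/s).
  { assert (E : exp (1/s) > 1 + 1/s).
    { apply exp_ineq1. apply Rgt_not_eq. apply Rdiv_lt_0_compat; lra. }
    unfold L1. rewrite <- (ln_exp (1/s)). rewrite <- ln_mult by (try apply exp_pos; lra).
    apply ln_increasing. lra.
    apply (Rmult_lt_reg_r m). lra.
    replace ((s + 1) / m * m) with (s+1) by (field; lra).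
    replace (s / m * exp (1 / s) * m) with (s * exp (1/s)) by (field; lra).
    assert (s * (1 + 1/s) = s + 1) by (field; lra). nra. }
  assert (F : s*L2*L3 < s*L1*L3 + L3).
  { assert (s * L2 < s * (L1 + 1/s)) by (apply Rmult_lt_compat_l; lra).
    replace (s*(L1 + 1/s)) with (s*L1 + 1) in H by (field; lra).
    apply (Rmult_lt_compat_r L3) in H; lra. }
  assert (G : L3*(s*L2+m) < L1*(s*L3+m+1)).
  { assert (L3*(m+1) < L1*(m+1)) by (apply Rmult_lt_compat_r; lra).
    replace (L3*(s*L2+m)) with (s*L2*L3 + L3*(m+1) - L3) by ring.
    replace (L1*(s*L3+m+1)) with (s*L1*L3 + L1*(m+1)) by ring. lra. }
  apply (Rmult_lt_reg_r (L1*L2*L3/m)). apply Rdiv_lt_0_compat; [|lra]. repeat apply Rmult_lt_0_compat; lra.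
  replace (m / L1 * (s + m / L2) * (L1 * L2 * L3 / m)) with (L3*(s*L2+m)) by (field; lra).
  replace (m / L2 * (s + (m + 1) / L3) * (L1 * L2 * L3 / m)) with (L1*(s*L3+m+1)) by (field; lra).
  exact G.
Qed.
Lemma real_core T m na w : 1 <= m -> m + 1 <= T + 1 -> 0 < na -> 0 < w ->
  (m / ln ((T+1)/m)) * w / (T + m / ln ((T+1)/m)) * (na / (T + 1 + (m+1)/ln((T+1+1)/(m+1))))
  < na / (T + m / ln ((T+1)/m)) * ((m / ln((T+1+1)/m)) * w / (T + 1 + m / ln((T+1+1)/m))).
Proof.
  intros Hm HT Hna Hw.
  assert (Hq1 : 1 < (T+1)/m) by (apply (Rmult_lt_reg_r m); [lra|]; unfold Rdiv; rewrite Rmult_assoc, Rinv_l; lra).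
  assert (Hq2 : 1 < (T+1+1)/m) by (apply (Rmult_lt_reg_r m); [lra|]; unfold Rdiv; rewrite Rmult_assoc, Rinv_l; lra).
  assert (Hq3 : 1 < (T+1+1)/(m+1)) by (apply (Rmult_lt_reg_r (m+1)); [lra|]; unfold Rdiv; rewrite Rmult_assoc, Rinv_l; lra).
  pose proof (key (T+1) m Hm HT) as K.
  set (b0 := m / ln ((T+1)/m)) in *. set (b1 := m / ln((T+1+1)/m)) in *.
  set (b2 := (m+1)/ln((T+1+1)/(m+1))) in *.
  assert (P0 : 0 < b0) by (apply Rdiv_lt_0_compat; [lra|apply ln_pos; auto]).
  assert (P1 : 0 < b1) by (apply Rdiv_lt_0_compat; [lra|apply ln_pos; auto]).
  assert (P2 : 0 < b2) by (apply Rdiv_lt_0_compat; [lra|apply ln_pos; auto]).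
  assert (T0 : 0 <= T) by lra.
  replace (b0 * w / (T + b0) * (na / (T + 1 + b2))) with (na*w/(T+b0) * (b0/(T+1+b2))) by (field; lra).
  replace (na / (T + b0) * (b1 * w / (T + 1 + b1))) with (na*w/(T+b0) * (b1/(T+1+b1))) by (field; lra).
  apply Rmult_lt_compat_l. apply Rdiv_lt_0_compat; [apply Rmult_lt_0_compat|]; lra.
  apply (Rmult_lt_reg_r ((T+1+b2)*(T+1+b1))). apply Rmult_lt_0_compat; lra.
  replace (b0 / (T + 1 + b2) * ((T + 1 + b2) * (T + 1 + b1))) with (b0*(T+1+b1)) by (field; lra).
  replace (b1 / (T + 1 + b1) * ((T + 1 + b2) * (T + 1 + b1))) with (b1*(T+1+b2)) by (field; lra).
  exact K.
Qed.
Section S.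
Context {X : Type} (eq_dec : forall a b : X, {a = b} + {a <> b}).

Lemma nd_same (l l' : list X) : (forall x, In x l <-> In x l') ->
  ndistinct eq_dec l = ndistinct eq_dec l'.
Proof.
  intro H. unfold ndistinct. apply Permutation_length.
  apply NoDup_Permutation; try apply NoDup_nodup.
  intro y. rewrite !nodup_In. apply H.
Qed.

Lemma nd_perm (l l' : list X) : Permutation l l' ->
  ndistinct eq_dec l = ndistinct eq_dec l'.
Proof.
  intro H. apply nd_same. intro y; split; intro; eauto using Permutation_in, Permutation_sym.
Qed.

Lemma nd_le (l : list X) : (ndistinct eq_dec l <= length l)%nat.
Proof.
  unfold ndistinct. apply NoDup_incl_length. apply NoDup_nodup.
  intros y Hy. apply nodup_In in Hy. exact Hy.
Qed.

Lemma nd_pos (c : X) (l : list X) : (1 <= ndistinct eq_dec (c :: l))%nat.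
Proof.
  unfold ndistinct. assert (In c (nodup eq_dec (c::l))) by (apply nodup_In; left; auto).
  destruct (nodup eq_dec (c::l)); simpl in *; [contradiction | lia].
Qed.

Lemma nd_snoc_old (l : list X) a : In a l -> ndistinct eq_dec (l ++ [a]) = ndistinct eq_dec l.
Proof.
  intro H. apply nd_same. intro y. rewrite in_app_iff. simpl. split; intuition; subst; auto.
Qed.

Lemma nd_snoc_new (l : list X) b : ~ In b l -> ndistinct eq_dec (l ++ [b]) = S (ndistinct eq_dec l).
Proof.
  intro H. transitivity (ndistinct eq_dec (b :: l)).
  - apply nd_perm. apply Permutation_sym, Permutation_cons_append.
  - unfold ndistinct. simpl. destruct (in_dec eq_dec b l); [contradiction|reflexivity].
Qed.

Lemma cnt_perm (l l' : list X) i : Permutation l l' -> cnt eq_dec l i = cnt eq_dec l' i.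
Proof. intro H. unfold cnt. apply Permutation_count_occ; auto. Qed.

Lemma beta_perm b0 (l l' : list X) : Permutation l l' -> beta_star eq_dec b0 l = beta_star eq_dec b0 l'.
Proof.
  intro H. unfold beta_star. rewrite (Permutation_length H), (nd_perm _ _ H). reflexivity.
Qed.

Lemma cond_perm u v b0 (l l' : list X) i : Permutation l l' ->
  cond_prob eq_dec u v b0 l i = cond_prob eq_dec u v b0 l' i.
Proof.
  intro H. unfold cond_prob. rewrite (cnt_perm _ _ i H), (beta_perm b0 _ _ H),
   (Permutation_length H), (nd_perm _ _ H). reflexivity.
Qed.

Fixpoint sp u v b0 (p l : list X) : R :=
  match l with [] => 1 | c :: r => cond_prob eq_dec u v b0 p c * sp u v b0 (p ++ [c]) r end.

Lemma sp_perm u v b0 l : forall p p', Permutation p p' -> sp u v b0 p l = sp u v b0 p' l.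
Proof.
  induction l as [|c r IH]; intros p p' H; simpl; auto.
  rewrite (cond_perm u v b0 _ _ c H). f_equal. apply IH. apply Permutation_app_tail; auto.
Qed.

Lemma sp_app u v b0 l1 : forall p l2, sp u v b0 p (l1 ++ l2) = sp u v b0 p l1 * sp u v b0 (p ++ l1) l2.
Proof.
  induction l1 as [|c r IH]; intros p l2; simpl.
  - rewrite app_nil_r. ring.
  - rewrite IH. rewrite <- app_assoc. simpl. ring.
Qed.

Lemma seq_sp_gen u v b0 l : forall p,
  fold_right Rmult 1 (map (fun t => match nth_error (p ++ l) t with
     | Some i => cond_prob eq_dec u v b0 (firstn t (p ++ l)) i | None => 1 end)
     (seq (length p) (length l))) = sp u v b0 p l.
Proof.
  induction l as [|c r IH]; intro p; simpl; auto.
  rewrite nth_error_app2 by lia. rewrite Nat.sub_diag. simpl.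
  rewrite firstn_app, Nat.sub_diag, firstn_all. simpl. rewrite app_nil_r.
  f_equal. specialize (IH (p ++ [c])). rewrite <- app_assoc in IH. simpl in IH.
  rewrite length_app in IH. simpl in IH. rewrite Nat.add_1_r in IH. exact IH.
Qed.

Lemma seq_sp u v b0 x : seq_prob eq_dec u v b0 x = sp u v b0 [] x.
Proof. unfold seq_prob. rewrite <- (seq_sp_gen u v b0 x []). reflexivity. Qed.


Lemma beta_S b0 (p : list X) k : length p = S k ->
  beta_star eq_dec b0 p = INR (ndistinct eq_dec p) / ln (INR (length p + 1) / INR (ndistinct eq_dec p)).
Proof. intro H. unfold beta_star. rewrite H. reflexivity. Qed.

Lemma beta_pos b0 (p : list X) : 0 < b0 -> 0 < beta_star eq_dec b0 p.
Proof.
  intro Hb. destruct p as [|c r] eqn:E.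
  - exact Hb.
  - rewrite (beta_S b0 _ (length r)) by reflexivity. rewrite <- E.
    pose proof (nd_le p). pose proof (nd_pos c r). rewrite <- E in H0.
    apply le_INR in H. apply le_INR in H0. simpl in H0.
    assert (0 < ln (INR (length p + 1) / INR (ndistinct eq_dec p))).
    { apply ln_pos. rewrite plus_INR. simpl.
      apply (Rmult_lt_reg_r (INR (ndistinct eq_dec p))). lra.
      unfold Rdiv. rewrite Rmult_assoc, Rinv_l by lra. lra. }
    apply Rdiv_lt_0_compat; lra.
Qed.

Lemma cond_pos u v b0 p i : 0 < b0 -> (forall i, 0 < u i) -> (forall k, 0 < v k) ->
  0 < cond_prob eq_dec u v b0 p i.
Proof.
  intros Hb Hu Hv. pose proof (beta_pos b0 p Hb). pose proof (pos_INR (length p)).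
  unfold cond_prob. destruct (0 <? cnt eq_dec p i)%nat eqn:E.
  - apply Nat.ltb_lt in E. apply lt_INR in E. simpl in E. apply Rdiv_lt_0_compat; lra.
  - apply Rdiv_lt_0_compat; [|lra]. specialize (Hu i). specialize (Hv (ndistinct eq_dec p)).
    apply Rmult_lt_0_compat; auto. apply Rmult_lt_0_compat; auto.
Qed.

Lemma sp_pos u v b0 l : 0 < b0 -> (forall i, 0 < u i) -> (forall k, 0 < v k) ->
  forall p, 0 < sp u v b0 p l.
Proof.
  intros Hb Hu Hv. induction l as [|c r IH]; intro p; simpl. lra.
  apply Rmult_lt_0_compat; auto. apply cond_pos; auto.
Qed.

Lemma fold_mult_perm (l l' : list R) : Permutation l l' -> fold_right Rmult 1 l = fold_right Rmult 1 l'.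
Proof. induction 1; simpl; try rewrite IHPermutation; try ring. congruence. Qed.

Lemma ml_perm (x y : list X) : Permutation x y -> ml_prob eq_dec x = ml_prob eq_dec y.
Proof.
  intro H. unfold ml_prob. rewrite (Permutation_length H). f_equal.
  rewrite (map_ext (fun j => INR (cnt eq_dec x j) ^ cnt eq_dec x j)
     (fun j => INR (cnt eq_dec y j) ^ cnt eq_dec y j)).
  2:{ intro j. rewrite (cnt_perm _ _ j H). reflexivity. }
  apply fold_mult_perm. apply Permutation_map.
  apply NoDup_Permutation; try apply NoDup_nodup. intro z. rewrite !nodup_In.
  split; intro; eauto using Permutation_in, Permutation_sym.
Qed.

Lemma swap_core u v b0 (Hb : 0 < b0) (Hu : forall i, 0 < u i) (Hv : forall k, 0 < v k)
  (l1 : list X) a b post : In a l1 -> ~ In b (l1 ++ [a]) ->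
  redundancy eq_dec u v b0 (l1 ++ b :: a :: post) > redundancy eq_dec u v b0 (l1 ++ a :: b :: post).
Proof.
  intros Ha Hb'.
  assert (Hba : b <> a) by (intro; subst; apply Hb'; apply in_or_app; right; left; auto).
  assert (Hbl : ~ In b l1) by (intro; apply Hb'; apply in_or_app; left; auto).
  assert (HP : Permutation (l1 ++ a :: b :: post) (l1 ++ b :: a :: post))
    by (apply Permutation_app_head; constructor).
  unfold redundancy. rewrite (ml_perm _ _ HP). rewrite !seq_sp, !sp_app. cbn [sp app].
  rewrite (sp_perm u v b0 post ((l1 ++ [b]) ++ [a]) ((l1 ++ [a]) ++ [b]))
    by (rewrite <- !app_assoc; apply Permutation_app_head; constructor).
  assert (core : cond_prob eq_dec u v b0 l1 b * cond_prob eq_dec u v b0 (l1 ++ [b]) a <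
                 cond_prob eq_dec u v b0 l1 a * cond_prob eq_dec u v b0 (l1 ++ [a]) b).
  { assert (Hex : exists c r, l1 = c :: r) by (destruct l1 as [|c r]; [contradiction|eauto]).
    destruct Hex as (c & r & El1).
    assert (Hlen : length l1 = S (length r)) by (subst; reflexivity).
    unfold cond_prob.
    rewrite (beta_S b0 l1 (length r)) by auto.
    rewrite (beta_S b0 (l1 ++ [a]) (length l1)) by (rewrite length_app; simpl; lia).
    rewrite (beta_S b0 (l1 ++ [b]) (length l1)) by (rewrite length_app; simpl; lia).
    rewrite (nd_snoc_old _ _ Ha), (nd_snoc_new _ _ Hbl).
    assert (C1 : cnt eq_dec l1 b = 0%nat) by (apply count_occ_not_In; auto).
    assert (C2 : cnt eq_dec (l1 ++ [a]) b = 0%nat).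
    { apply count_occ_not_In. intro H. apply in_app_iff in H. destruct H as [H|[H|H]]; auto. }
    assert (C3 : cnt eq_dec (l1 ++ [b]) a = cnt eq_dec l1 a).
    { unfold cnt. rewrite count_occ_app. simpl. destruct (eq_dec b a); [contradiction|lia]. }
    assert (C4 : (0 < cnt eq_dec l1 a)%nat) by (apply count_occ_In; auto).
    rewrite C1, C2, C3. remember (cnt eq_dec l1 a) as na eqn:Ena.
    destruct na as [|k]; [lia|]. cbn [Nat.ltb Nat.leb].
    rewrite !length_app. cbn [length].
    pose proof (nd_le l1) as Hle. pose proof (nd_pos c r) as Hpos. rewrite <- El1 in Hpos.
    apply lt_INR in C4. apply le_INR in Hle. apply le_INR in Hpos.
    rewrite !S_INR, !plus_INR, !INR_1 in *. rewrite INR_0 in C4.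
    apply real_core; try lra.
    all: try (apply Rmult_lt_0_compat; auto).
    rewrite INR_0 in Hpos; lra. }
  pose proof (sp_pos u v b0 l1 Hb Hu Hv []) as P1.
  pose proof (sp_pos u v b0 post Hb Hu Hv ((l1 ++ [a]) ++ [b])) as P2.
  pose proof (cond_pos u v b0 l1 b Hb Hu Hv). pose proof (cond_pos u v b0 (l1++[b]) a Hb Hu Hv).
  assert (ln (sp u v b0 [] l1 * (cond_prob eq_dec u v b0 l1 b *
     (cond_prob eq_dec u v b0 (l1 ++ [b]) a * sp u v b0 ((l1 ++ [a]) ++ [b]) post))) <
     ln (sp u v b0 [] l1 * (cond_prob eq_dec u v b0 l1 a *
     (cond_prob eq_dec u v b0 (l1 ++ [a]) b * sp u v b0 ((l1 ++ [a]) ++ [b]) post)))).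
  { apply ln_increasing.
    - repeat apply Rmult_lt_0_compat; auto.
    - rewrite <- !Rmult_assoc. apply Rmult_lt_compat_r; auto.
      rewrite !Rmult_assoc. apply Rmult_lt_compat_l; auto. }
  unfold Rgt. lra.
Qed.

Lemma swap_at_app (l1 : list X) a b r : swap_at (length l1) (l1 ++ a :: b :: r) = l1 ++ b :: a :: r.
Proof. induction l1 as [|c l IH]; simpl; auto. rewrite IH. reflexivity. Qed.

Lemma part1 u v b0 (Hb : 0 < b0) (Hu : forall i, 0 < u i) (Hv : forall k, 0 < v k)
  (x : list X) (t : nat) (a b : X) :
      (2 <= t)%nat -> (t <= length x - 1)%nat ->
      nth_error x (t - 1) = Some a -> nth_error x t = Some b ->
      In a (firstn (t - 1) x) -> ~ In b (firstn t x) ->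
      redundancy eq_dec u v b0 (swap_at (t - 1) x) > redundancy eq_dec u v b0 x.
Proof.
  intros H2 Hn Ha Hb' Ia Ib.
  destruct (nth_error_split x (t-1) Ha) as (l1 & l2 & Ex & Hl1). subst x.
  rewrite nth_error_app2 in Hb' by lia. replace (t - length l1)%nat with 1%nat in Hb' by lia.
  destruct l2 as [|b' post]; simpl in Hb'; [discriminate|]. injection Hb' as ->.
  rewrite firstn_app, <- Hl1, firstn_all, Nat.sub_diag in Ia. simpl in Ia. rewrite app_nil_r in Ia.
  rewrite firstn_app, firstn_all2 in Ib by lia. replace (t - length l1)%nat with 1%nat in Ib by lia.
  simpl in Ib. rewrite <- Hl1, swap_at_app. apply swap_core; auto.
Qed.

Fixpoint ins (a : X) (l : list X) : list (list X) :=
  match l with [] => [[a]] | c :: r => (a :: c :: r) :: map (cons c) (ins a r) end.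
Fixpoint perms (l : list X) : list (list X) :=
  match l with [] => [[]] | a :: r => flat_map (ins a) (perms r) end.

Lemma ins_in a l1 l2 : In (l1 ++ a :: l2) (ins a (l1 ++ l2)).
Proof.
  induction l1 as [|c l IH]; simpl.
  - destruct l2; simpl; auto.
  - right. apply in_map. auto.
Qed.

Lemma ins_perm a l : forall z, In z (ins a l) -> Permutation (a :: l) z.
Proof.
  induction l as [|c r IH]; simpl; intros z Hz.
  - destruct Hz as [<-|[]]. auto.
  - destruct Hz as [<-|Hz]; auto.
    apply in_map_iff in Hz. destruct Hz as (w & <- & Hw).
    apply IH in Hw. eapply perm_trans; [apply perm_swap|]. constructor; auto.
Qed.

Lemma perms_complete x : forall z, Permutation x z -> In z (perms x).
Proof.
  induction x as [|a r IH]; intros z H; simpl.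
  - apply Permutation_nil in H. subst. auto.
  - assert (In a z) by (eapply Permutation_in; eauto; left; auto).
    apply in_split in H0. destruct H0 as (z1 & z2 & ->).
    apply in_flat_map. exists (z1 ++ z2). split.
    + apply IH. eapply Permutation_cons_app_inv; eauto.
    + apply ins_in.
Qed.

Lemma perms_sound x : forall z, In z (perms x) -> Permutation x z.
Proof.
  induction x as [|a r IH]; intros z H; simpl in H.
  - destruct H as [<-|[]]; auto.
  - apply in_flat_map in H. destruct H as (w & Hw & Hz).
    apply ins_perm in Hz. eapply perm_trans; [|exact Hz]. constructor; auto.
Qed.

Lemma argmax (f : list X -> R) (L : list (list X)) : L <> [] ->
  exists y, In y L /\ forall z, In z L -> f z <= f y.
Proof.
  induction L as [|c r IH]; intro H; [congruence|].
  destruct r as [|d r'].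
  - exists c. split; [left; auto|]. intros z [<-|[]]; lra.
  - destruct IH as (y & Hy & Hm); [discriminate|].
    destruct (Rle_dec (f c) (f y)).
    + exists y. split; [right; auto|]. intros z [<-|Hz]; auto.
    + exists c. split; [left; auto|]. intros z [<-|Hz]; [lra|]. specialize (Hm z Hz). lra.
Qed.

Lemma structure (y : list X) :
  (exists l1 a b post, y = l1 ++ a :: b :: post /\ In a l1 /\ ~ In b (l1 ++ [a])) \/
  (exists d r, y = d ++ r /\ NoDup d /\ incl r d).
Proof.
  induction y as [|c y0 IH] using rev_ind.
  - right. exists [], []. repeat split; auto. constructor. intros z [].
  - destruct IH as [(l1 & a & b & post & E & H1 & H2)|(d & r & E & Hd & Hr)].
    + left. exists l1, a, b, (post ++ [c]). subst. rewrite <- app_assoc. auto.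
    + destruct (in_dec eq_dec c d) as [Hc|Hc].
      * right. exists d, (r ++ [c]). subst. rewrite app_assoc. repeat split; auto.
        intros z Hz. apply in_app_iff in Hz. destruct Hz as [Hz|[<-|[]]]; auto.
      * destruct r as [|e0 r0] eqn:Er.
        -- right. exists (d ++ [c]), []. subst. rewrite !app_nil_r. split; [reflexivity|split].
           ++ apply NoDup_rev in Hd. rewrite <- (rev_involutive (d ++ [c])). apply NoDup_rev.
              rewrite rev_app_distr. simpl. constructor; auto. rewrite <- in_rev. auto.
           ++ intros z [].
        -- rewrite <- Er in *. assert (Hne : r <> []) by (subst; discriminate).
           destruct (exists_last Hne) as (r' & e & Er').
           left. exists (d ++ r'), e, c, []. subst y0. rewrite Er'. repeat split.
           ++ rewrite <- !app_assoc. reflexivity.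
           ++ apply in_or_app. left. apply Hr. rewrite Er'. apply in_or_app. right. left. auto.
           ++ intro H. rewrite <- app_assoc in H. apply in_app_iff in H. destruct H as [H|H]; auto.
              apply in_app_iff in H. destruct H as [H|[H|[]]].
              ** apply Hc, Hr. rewrite Er'. apply in_or_app; auto.
              ** subst e. apply Hc, Hr. rewrite Er'. apply in_or_app. right. left. auto.
Qed.

Lemma good_nd (d r : list X) : NoDup d -> incl r d ->
  ndistinct eq_dec (firstn (ndistinct eq_dec (d ++ r)) (d ++ r)) = ndistinct eq_dec (d ++ r).
Proof.
  intros Hd Hr.
  assert (E : ndistinct eq_dec (d ++ r) = length d).
  { rewrite (nd_same (d ++ r) d).
    - unfold ndistinct. rewrite nodup_fixed_point; auto.
    - intro z. rewrite in_app_iff. split; [intros [H|H]; auto|auto]. }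
  rewrite E, firstn_app, Nat.sub_diag, firstn_all. simpl. rewrite app_nil_r.
  unfold ndistinct. rewrite nodup_fixed_point; auto.
Qed.
End S.

Theorem mainTheorem6
  (X : Type) (eq_dec : forall a b : X, {a = b} + {a <> b})
  (enum : list X) (enum_nodup : NoDup enum) (enum_full : forall a : X, In a enum)
  (u : X -> R) (v : nat -> R) (beta0 : R)
  (u_pos : forall i, 0 < u i) (v_pos : forall k, 0 < v k) (beta0_pos : 0 < beta0)
  (w_le1 : forall p : list X, new_weight_sum eq_dec enum u v p <= 1) :
  (forall (x : list X) (t : nat) (a b : X),
      (2 <= t)%nat -> (t <= length x - 1)%nat ->
      nth_error x (t - 1) = Some a ->            (* a = x_t *)
      nth_error x t = Some b ->                  (* b = x_{t+1} *)
      In a (firstn (t - 1) x) ->                 (* x_t in A_{t-1} *)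
      ~ In b (firstn t x) ->                     (* x_{t+1} not in A_t *)
      redundancy eq_dec u v beta0 (swap_at (t - 1) x)
        > redundancy eq_dec u v beta0 x)
  /\
  (forall x : list X,
      exists y : list X,
        Permutation x y /\
        ndistinct eq_dec (firstn (ndistinct eq_dec x) y) = ndistinct eq_dec x /\
        forall z : list X, Permutation x z ->
          redundancy eq_dec u v beta0 z <= redundancy eq_dec u v beta0 y).
Proof.
  split.
  - intros. eapply part1; eauto.
  - intro x.
    destruct (argmax (redundancy eq_dec u v beta0) (perms x)) as (y & Hy & Hm).
    { intro H. pose proof (perms_complete x x (Permutation_refl x)) as H0.
      rewrite H in H0. contradiction. }
    exists y. pose proof (perms_sound x y Hy) as Hxy. split; auto. split.
    + rewrite (nd_perm eq_dec _ _ Hxy).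
      destruct (structure eq_dec y) as [(l1&a&b&post&E&H1&H2)|(d&r&E&Hd&Hr)].
      * exfalso.
        pose proof (swap_core eq_dec u v beta0 beta0_pos u_pos v_pos l1 a b post H1 H2) as H.
        assert (Hp : Permutation x (l1 ++ b :: a :: post)).
        { eapply perm_trans; [exact Hxy|]. rewrite E. apply Permutation_app_head. constructor. }
        specialize (Hm _ (perms_complete _ _ Hp)). rewrite <- E in H. unfold Rgt in H. lra.
      * subst y. apply good_nd; auto.
    + intros z Hz. apply Hm. apply perms_complete; auto.
Qed.
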